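(* (1) Two elements of the hypoplactic monoid ${\mathsf{hypo}}$ lie in the same connected component of $K({\mathsf{hypo}})$ if and only if they have the same evaluation; i.e. $\sim^*$ coincides with $\equiv_{\mathrm{ev}}$ in ${\mathsf{hypo}}$. (2) For every $n\ge 1$, every connected component of $K({\mathsf{hypo}}_n)$ has diameter at most $n-1$, and some connected component of $K({\mathsf{hypo}}_n)$ has diameter exactly $n-1$. Hence the maximum diameter of a connected component of $K({\mathsf{hypo}}_n)$ is $n-1$.
   Context: Let $\mathcal{A}=\{1<2<3<\cdots\}$ be the ordered alphabet of positive integers and $\mathcal{A}_n=\{1<2<\cdots<n\}$. For a monoid $M$ and $s,t\in M$, write $s\sim t$ if there exist $x,y\in M$ with $s=xy$ and $t=yx$ (a cyclic shift); $\sim^*$ is the reflexive–transitive closure of $\sim$. The cyclic shift graph $K(M)$ is the undirected graph with vertex set $M$ and an edge between $s$ and $t$ iff $s\sim t$; its connected components are the $\sim^*$-classes, and distances/diameters are graph distances in $K(M)$. The evaluation of a word $w$ is the tuple $(|w|_a)_{a}$ giving the number of occurrences of each letter $a$; all monoids considered are defined by presentations whose defining relations preserve evaluation, so the evaluation of an element is well defined, and $s\equiv_{\mathrm{ev}} t$ means $s$ and $t$ have the same evaluation. The hypoplactic monoid ${\mathsf{hypo}}$ is $\mathcal{A}^*$ modulo the congruence generated by the relations $acb=cab$ ($a\le b<c$), $bac=bca$ ($a<b\le c$), $cadb=acbd$ ($a\le b<c\le d$), and $bdac=dbca$ ($a<b\le c<d$), where $a,b,c,d$ range over letters. ${\mathsf{hypo}}_n$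 is the monoid defined by the same relations restricted to letters of $\mathcal{A}_n$, i.e. a quotient of $\mathcal{A}_n^*$. *)

(* Defs.v *)
From Stdlib Require Import Relations.
From mathcomp Require Import all_boot.
Set Implicit Arguments. Unset Strict Implicit. Unset Printing Implicit Defensive.

Definition hypo_rel (l r : seq nat) : Prop :=
  (exists a b c, [/\ a <= b, b < c, l = [:: a; c; b] & r = [:: c; a; b]]) \/
  (exists a b c, [/\ a < b, b <= c, l = [:: b; a; c] & r = [:: b; c; a]]) \/
  (exists a b c d, [/\ a <= b, b < c, c <= d, l = [:: c; a; d; b] & r = [:: a; c; b; d]]) \/
  (exists a b c d, [/\ a < b, b <= c, c < d, l = [:: b; d; a; c] & r = [:: d; b; c; a]]).

Definition hypo_step (u v : seq nat) : Prop :=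
  exists p q l r, [/\ hypo_rel l r, u = p ++ l ++ q & v = p ++ r ++ q].

Definition hypo_cong : relation (seq nat) := clos_refl_sym_trans (seq nat) hypo_step.

Definition alphA : pred nat := fun a => 0 < a.
Definition alphAn (n : nat) : pred nat := fun a => 0 < a <= n.

(* Cyclic shift in the monoid A^*/hypo_cong: s ~ t iff s = xy, t = yx for some
   elements x y of the monoid (represented by words over the alphabet). *)
Definition cshift (A : pred nat) (s t : seq nat) : Prop :=
  exists x y, [/\ all A x, all A y, hypo_cong s (x ++ y) & hypo_cong t (y ++ x)].

(* walk A k s t : there is a walk of length k in K(M) from [s] to [t]
   (length 0 means [s] = [t] as monoid elements). *)
Fixpoint walk (A : pred nat) (k : nat) (s t : seq nat) : Prop :=
  match k with
  | 0 => hypo_cong s t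
  | k'.+1 => exists w, all A w /\ cshift A s w /\ walk A k' w t
  end.

Definition connected (A : pred nat) (s t : seq nat) : Prop := exists k, walk A k s t.

Definition dist_eq (A : pred nat) (s t : seq nat) (k : nat) : Prop :=
  walk A k s t /\ forall j, j < k -> ~ walk A j s t.

Definition dist_le (A : pred nat) (s t : seq nat) (k : nat) : Prop :=
  exists j, j <= k /\ walk A j s t.

Definition ev_eq (s t : seq nat) : Prop := forall a, count_mem a s = count_mem a t.

(* Main.v *)
Require Import Defs.
From Stdlib Require Import Relations.
From mathcomp Require Import all_boot.
From mathcomp Require Import zify.


Notation hc := hypo_cong.

Lemma hc_refl u : hc u u. Proof. exact: rst_refl. Qed.
Lemma hc_sym u v : hc u v -> hc v u. Proof. exact: rst_sym. Qed.
Lemma hc_trans u v w : hc u v -> hc v w -> hc u w. Proof. exact: rst_trans. Qed.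

Lemma hc_ctx p q u v : hc u v -> hc (p ++ u ++ q) (p ++ v ++ q).
Proof.
elim => {u v} [u v [p' [q' [l [r [Hr -> ->]]]]]| u | u v _ IH | u v w _ IH1 _ IH2].
- apply: rst_step; exists (p ++ p'), (q' ++ q), l, r; split => //; by rewrite -!catA.
- exact: rst_refl.
- exact: rst_sym.
- exact: rst_trans IH2.
Qed.

Lemma hcC p q u v A B : hc u v -> A = p ++ u ++ q -> B = p ++ v ++ q -> hc A B.
Proof. by move=> H -> ->; apply: hc_ctx. Qed.
Arguments hcC p q {u v A B}.

Lemma rel_hc l r : hypo_rel l r -> hc l r.
Proof. move=> H; apply: rst_step; exists [::], [::], l, r; split=> //; by rewrite cats0. Qed.

Lemma R1 a b c : a <= b -> b < c -> hc [:: a; c; b] [:: c; a; b].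
Proof. move=> h1 h2; apply: rel_hc; left; exists a, b, c; split=> //. Qed.
Lemma R2 a b c : a < b -> b <= c -> hc [:: b; a; c] [:: b; c; a].
Proof. move=> h1 h2; apply: rel_hc; right; left; exists a, b, c; split=> //. Qed.
Lemma R3 a b c d : a <= b -> b < c -> c <= d -> hc [:: c; a; d; b] [:: a; c; b; d].
Proof. move=> h1 h2 h3; apply: rel_hc; right; right; left; exists a, b, c, d; split=> //. Qed.
Lemma R4 a b c d : a < b -> b <= c -> c < d -> hc [:: b; d; a; c] [:: d; b; c; a].
Proof. move=> h1 h2 h3; apply: rel_hc; right; right; right; exists a, b, c, d; split=> //. Qed.

Notation asc := (pairwise leq).
Ltac clr := repeat match goal with
 | H : is_true ?b |- _ => lazymatch b with leq _ _ => fail | _ => clear H end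
 | H : forall _, _ |- _ => clear H
 | H : hc _ _ |- _ => clear H
 | H : @eq (seq nat) _ _ |- _ => clear H
 | H : @eq (seq (seq nat)) _ _ |- _ => clear H
end.
Ltac flia := clr; lia.
Ltac lseq := do 3 (rewrite /= -?cats1 ?cats0 -?catA); try reflexivity.

Lemma SW1 c B w : asc (rcons B w) -> all (fun x => x < c) (rcons B w) ->
  hc (c :: rcons B w) (B ++ [:: c; w]).
Proof.
elim: B => [|b B IH] /=; first by move=> *; exact: hc_refl.
move=> /andP[Hb Hp] /andP[Hbc Ha].
have [n [rest Hr]] : exists n rest, rcons B w = n :: rest.
  by case: (B) => [|x s]; [exists w, [::] | exists x, (rcons s w)].
apply: (@hc_trans _ (b :: c :: rcons B w)).
  apply: hc_sym; apply: (hcC [::] rest (R1 b n c _ _)); rewrite ?Hr //.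
  - by move: Hb; rewrite Hr /= => /andP[].
  - by move: Ha; rewrite Hr /= => /andP[].
by apply: (hcC [:: b] [::] (IH Hp Ha)); rewrite ?cats0.
Qed.

Lemma SW2 x Q z : asc (x :: Q) -> z < x -> hc (x :: Q ++ [:: z]) (x :: z :: Q).
Proof.
elim: Q x => [|q Q IH] x /=; first by move=> *; exact: hc_refl.
move=> /andP[/andP[Hxq _] Hp] Hzx.
have Hzq : z < q by flia.
apply: (@hc_trans _ (x :: q :: z :: Q)).
  by apply: (hcC [:: x] [::] (IH q Hp Hzq)); lseq.
apply: hc_sym; apply: (hcC [::] Q (R2 z x q Hzx Hxq)) => //.
Qed.

Lemma Ygen p z B b : asc (rcons B b) -> all (fun x => x < p) (rcons B b) -> p <= z ->
  hc (B ++ [:: p; b; z]) (p :: z :: rcons B b).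
Proof.
elim/last_ind: B b => [|B s IH] b.
  move=> _; rewrite /= andbT => Hb Hpz; exact: (R2 b p z Hb Hpz).
move=> H1 H2 Hpz.
move: H1; rewrite pairwise_rcons => /andP[Hall Hp].
move: H2; rewrite all_rcons => /andP[Hbp Ha].
move: Hall; rewrite all_rcons => /andP[Hsb _].
move: Ha; rewrite all_rcons => /andP[Hsp Ha].
apply: (@hc_trans _ (B ++ [:: p; s; z; b])).
  apply: hc_sym; apply: (hcC B [::] (R3 s b p z Hsb Hbp Hpz)); by lseq.
have := IH s Hp; rewrite all_rcons Hsp Ha => /(_ isT Hpz) H.
by apply: (hcC [::] [:: b] H); lseq.
Qed.

Lemma Y p z B : asc B -> all (fun x => x < p) B -> p <= z -> hc (p :: B ++ [:: z]) (p :: z :: B).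
Proof.
case/lastP: B => [|B b] Hs Ha Hpz; first exact: hc_refl.
apply: (@hc_trans _ (B ++ [:: p; b; z])); last exact: Ygen.
by apply: (hcC [::] [:: z] (SW1 p B b Hs Ha)); lseq.
Qed.

Fixpoint canonb (bs : seq (seq nat)) : bool :=
  if bs is T :: bs' then
    [&& T != [::], asc T, all (fun y => y < head 0 T) (flatten bs') & canonb bs']
  else true.

Lemma asc_head_last s x : asc (rcons s x) -> head x s <= x.
Proof. case: s => [|h s] //= /andP[/allP H _]; apply: H; by rewrite mem_rcons inE eqxx. Qed.

Lemma Y' bs p z : canonb bs -> all (fun x => x < p) (flatten bs) -> p <= z ->
  hc (p :: flatten bs ++ [:: z]) (p :: z :: flatten bs).
Proof.
elim: bs p => [|T bs IH] p /=; first by move=> *; exact: hc_refl.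
case/lastP: T => [|T t] //.
move=> /and4P[_ Hs Hl Hc]; rewrite all_cat => /andP[HT HL] Hpz.
have Hht := asc_head_last T t Hs.
have Htp : t < p by move: HT; rewrite all_rcons => /andP[].
have HLt : all (fun x => x < t) (flatten bs).
  apply/allP => x Hx; move/allP: Hl => /(_ x Hx); rewrite headI /=; flia.
apply: (@hc_trans _ (p :: T ++ t :: z :: flatten bs)).
  have := IH t Hc HLt (ltnW (leq_trans Htp Hpz)) => H.
  by apply: (hcC (p :: T) [::] H); lseq.
apply: (@hc_trans _ ((p :: z :: rcons T t) ++ flatten bs)); last exact: hc_refl.
by apply: (hcC [::] (flatten bs) (Y p z (rcons T t) Hs HT Hpz)); lseq.
Qed.

Lemma M3' Q q bs : asc (q :: Q) -> canonb bs -> all (fun x => x < q) (flatten bs) ->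
  hc (q :: flatten bs ++ Q) (q :: Q ++ flatten bs).
Proof.
elim: Q q => [|q' Q IH] q /=; first by rewrite cats0 => *; exact: hc_refl.
move=> /andP[/andP[Hqq' _] Hp] Hc Ha.
apply: (@hc_trans _ (q :: q' :: flatten bs ++ Q)).
  by apply: (hcC [::] Q (Y' bs q q' Hc Ha Hqq')); lseq.
have Ha' : all (fun x => x < q') (flatten bs) by apply/allP => x /(allP Ha); flia.
by apply: (hcC [:: q] [::] (IH q' Hp Hc Ha')); lseq.
Qed.

Lemma asc_rcons_le s z : asc s -> all (fun x => x <= z) s -> asc (rcons s z).
Proof. by move=> H1 H2; rewrite pairwise_rcons H1 H2. Qed.

Lemma canonb1 s : s != [::] -> asc s -> canonb [:: s].
Proof. by move=> H1 H2 /=; rewrite H1 H2. Qed.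

Lemma rcons_nnil (s : seq nat) x : rcons s x != [::]. Proof. by case: s. Qed.

Lemma M2 P Q z : P != [::] -> Q != [::] -> asc P -> asc Q ->
  all (fun x => x <= z) P -> all (fun x => z < x) Q ->
  hc (P ++ Q ++ [:: z]) (Q ++ P ++ [:: z]).
Proof.
move=> HPn HQn HP HQ HPz HQz; case: Q HQn HQ HQz => [|q Q] // _ HQ HQz.
case/lastP: P HPn HP HPz => [|P p] // _ HP HPz.
have Hzq : z < q by move: HQz => /= /andP[].
have Hpz : p <= z by move: HPz; rewrite all_rcons => /andP[].
apply: (@hc_trans _ (rcons P p ++ [:: q, z & Q])).
  by apply: (hcC (rcons P p) [::] (SW2 q Q z HQ Hzq)); lseq.
apply: (@hc_trans _ (P ++ [:: q; p; z] ++ Q)).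
  by apply: (hcC P Q (R1 p z q Hpz Hzq)); lseq.
have HallP : all (fun x => x < q) (rcons P p).
  by apply/allP => x /(allP HPz); flia.
apply: (@hc_trans _ ((q :: rcons P p) ++ z :: Q)).
  by apply: hc_sym; apply: (hcC [::] (z :: Q) (SW1 q P p HP HallP)); lseq.
have Hc := canonb1 (rcons (rcons P p) z) (rcons_nnil _ _) (asc_rcons_le _ _ HP HPz).
have HallZ : all (fun x => x < q) (flatten [:: rcons (rcons P p) z]).
  by rewrite /= cats0 all_rcons Hzq HallP.
have HqQ : asc (q :: Q) := HQ.
by apply: (hcC [::] [::] (M3' Q q _ HqQ Hc HallZ)); lseq.
Qed.

Lemma W q B Q z : B != [::] -> asc B -> all (fun x => x < z) B -> z < q -> asc (q :: Q) ->
  hc (q :: B ++ Q ++ [:: z]) (q :: B ++ z :: Q).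
Proof.
case: Q => [|q1 Q] HB HaB HBz Hzq HqQ; first exact: hc_refl.
case/lastP: B HB HaB HBz => [|B b] // _ HaB HBz.
have Hbz : b < z by move: HBz; rewrite all_rcons => /andP[].
have Hqq1 : q <= q1 by move: HqQ => /= /andP[/andP[]].
have Hq1Q : asc (q1 :: Q) by move: HqQ => /= /andP[_].
have HallB : all (fun x => x < q) (rcons B b) by apply/allP => x /(allP HBz); flia.
apply: (@hc_trans _ (B ++ [:: q; b] ++ q1 :: Q ++ [:: z])).
  by apply: (hcC [::] (q1 :: Q ++ [:: z]) (SW1 q B b HaB HallB)); lseq.
apply: (@hc_trans _ (B ++ [:: q; b] ++ [:: q1, z & Q])).
  by apply: (hcC (B ++ [:: q; b]) [::] (SW2 q1 Q z Hq1Q (leq_trans Hzq Hqq1))); lseq.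
apply: (@hc_trans _ (B ++ [:: b; q; z; q1] ++ Q)).
  by apply: (hcC B Q (R3 b z q q1 (ltnW Hbz) Hzq Hqq1)); lseq.
have HaBz : asc (rcons (rcons B b) z) by apply: asc_rcons_le => //; apply/allP => x /(allP HBz); flia.
have HallBz : all (fun x => x < q) (rcons (rcons B b) z) by rewrite all_rcons Hzq HallB.
by apply: hc_sym; apply: (hcC [::] (q1 :: Q) (SW1 q (rcons B b) z HaBz HallBz)); lseq.
Qed.

Lemma Tr p q M b1 bt : asc (b1 :: rcons M bt) -> all (fun x => x < p) (b1 :: rcons M bt) -> p <= q ->
  hc (p :: b1 :: q :: rcons M bt) (b1 :: M ++ [:: p; bt; q]).
Proof.
elim: M b1 => [|m M IH] b1 /=.
  move=> H1 H2 Hpq.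
  have Hb1 : b1 <= bt by move: H1; rewrite !andbT.
  have Hbt : bt < p by move: H2; rewrite !andbT => /andP[].
  exact: (R3 b1 bt p q Hb1 Hbt Hpq).
move=> /andP[/andP[Hb1m _] Hp] /andP[Hb1p Ha] Hpq.
have Hmp : m < p by move: Ha => /= /andP[].
apply: (@hc_trans _ (b1 :: p :: m :: q :: rcons M bt)).
  by apply: (hcC [::] (rcons M bt) (R3 b1 m p q Hb1m Hmp Hpq)); lseq.
by apply: (hcC [:: b1] [::] (IH m Hp Ha Hpq)); lseq.
Qed.

Lemma Ksingle p q B z : B != [::] -> asc B -> all (fun x => x < p) B -> p <= z -> z < q ->
  hc (p :: q :: B ++ [:: z]) (q :: p :: z :: B).
Proof.
case: B => [|b1 B] // _; case/lastP: B => [|M bt].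
  move=> _ /= /andP[Hb1 _] Hpz Hzq; exact: (R4 b1 p z q Hb1 Hpz Hzq).
move=> Has Hap Hpz Hzq.
have Hpq : p <= q by flia.
have Hb1p : b1 < p by move: Hap => /= /andP[].
have Hbtp : bt < p by move: Hap => /= /andP[_]; rewrite all_rcons => /andP[].
have Has' : asc (rcons (b1 :: M) bt) by [].
have HasM : asc (b1 :: M) by move: Has'; rewrite pairwise_rcons => /andP[].
have HapM : all (fun x => x < p) (b1 :: M) by move: Hap; rewrite -rcons_cons all_rcons => /andP[].
apply: (@hc_trans _ (p :: b1 :: q :: rcons M bt ++ [:: z])).
  by apply: hc_sym; apply: (hcC [::] (rcons M bt ++ [:: z]) (R2 b1 p q Hb1p Hpq)); lseq.
apply: (@hc_trans _ (b1 :: M ++ [:: p; bt; q; z])).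
  by apply: (hcC [::] [:: z] (Tr p q M b1 bt Has Hap Hpq)); lseq.
apply: (@hc_trans _ (b1 :: M ++ [:: p; q; bt; z])).
  by apply: (hcC (b1 :: M) [:: z] (R2 bt p q Hbtp Hpq)); lseq.
apply: (@hc_trans _ (b1 :: M ++ [:: q; p; z; bt])).
  by apply: (hcC (b1 :: M) [::] (R4 bt p z q Hbtp Hpz Hzq)); lseq.
have HasMp : asc (rcons (b1 :: M) p) by apply: asc_rcons_le => //; apply/allP => x /(allP HapM); flia.
have HallMq : all (fun x => x < q) (rcons (b1 :: M) p).
  by rewrite all_rcons; apply/andP; split; [flia | apply/allP => x /(allP HapM); flia].
apply: (@hc_trans _ (q :: b1 :: M ++ [:: p; z; bt])).
  by apply: hc_sym; apply: (hcC [::] [:: z; bt] (SW1 q (b1 :: M) p HasMp HallMq)); lseq.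
apply: (@hc_trans _ (q :: b1 :: M ++ [:: p; bt; z])).
  by apply: hc_sym; apply: (hcC (q :: b1 :: M) [::] (R2 bt p z Hbtp Hpz)); lseq.
have HallMp : all (fun x => x < p) (rcons (b1 :: M) bt) by rewrite all_rcons Hbtp HapM.
apply: (@hc_trans _ (q :: p :: rcons (b1 :: M) bt ++ [:: z])).
  by apply: hc_sym; apply: (hcC [:: q] [:: z] (SW1 p (b1 :: M) bt Has' HallMp)); lseq.
by apply: (hcC [:: q] [::] (Y p z (rcons (b1 :: M) bt) Has' HallMp Hpz)); lseq.
Qed.

Lemma K P Q B z : P != [::] -> Q != [::] -> B != [::] -> asc P -> asc Q -> asc B ->
  all (fun x => x <= z) P -> all (fun x => z < x) Q ->
  all (fun b => all (fun x => b < x) P) B ->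
  hc (P ++ Q ++ B ++ [:: z]) (Q ++ P ++ z :: B).
Proof.
move=> HPn HQn HB HP HQ HaB HPz HQz HBP; case: Q HQn HQ HQz => [|q Q] // _ HQ HQz.
case/lastP: P HPn HP HPz HBP => [|P p] // _ HP HPz HBP.
have Hzq : z < q by move: HQz => /= /andP[].
have Hpz : p <= z by move: HPz; rewrite all_rcons => /andP[].
have HBp : all (fun x => x < p) B.
  by apply/allP => b /(allP HBP) /allP; apply; rewrite mem_rcons inE eqxx.
have HBz : all (fun x => x < z) B by apply/allP => b /(allP HBp); flia.
have HBq : all (fun x => x < q) B by apply/allP => b /(allP HBz); flia.
have HqQ : asc (q :: Q) := HQ.
apply: (@hc_trans _ (rcons P p ++ q :: B ++ Q ++ [:: z])).
  have HB1 : all (fun x => x < q) (flatten [:: B]) by rewrite /= cats0.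
  by apply: hc_sym; apply: (hcC (rcons P p) [:: z] (M3' Q q [:: B] HqQ (canonb1 B HB HaB) HB1)); lseq.
apply: (@hc_trans _ (rcons P p ++ q :: B ++ z :: Q)).
  by apply: (hcC (rcons P p) [::] (W q B Q z HB HaB HBz Hzq HqQ)); lseq.
apply: (@hc_trans _ (P ++ [:: q, p, z & B] ++ Q)).
  by apply: (hcC P Q (Ksingle p q B z HB HaB HBp Hpz Hzq)); lseq.
have HallP : all (fun x => x < q) (rcons P p) by apply/allP => x /(allP HPz); flia.
apply: (@hc_trans _ ((q :: rcons P p) ++ z :: B ++ Q)).
  by apply: hc_sym; apply: (hcC [::] (z :: B ++ Q) (SW1 q P p HP HallP)); lseq.
have Hc : canonb [:: rcons (rcons P p) z; B].
  apply/and4P; split; first exact: rcons_nnil.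
  - by apply: asc_rcons_le.
  - rewrite /= cats0; apply/allP => b /(allP HBP) /allP H; rewrite headI /=; apply: H.
    by case: (P) => [|x s] /=; rewrite ?inE ?eqxx.
  - exact: canonb1.
have Hall : all (fun x => x < q) (flatten [:: rcons (rcons P p) z; B]).
  by rewrite /= cats0 all_cat all_rcons Hzq HallP HBq.
by apply: (hcC [::] [::] (M3' Q q _ HqQ Hc Hall)); lseq.
Qed.

Fixpoint ins (bs : seq (seq nat)) (z : nat) : seq (seq nat) :=
  if bs is T :: bs' then
    if z < head 0 T then T :: ins bs' z
    else (if [seq c <- T | z < c] is [::] then rcons T z :: bs'
          else [seq c <- T | z < c] :: rcons [seq c <- T | c <= z] z :: bs')
  else [:: [:: z]].

Lemma filter_nil_all (a : pred nat) s : [seq c <- s | a c] = [::] -> all (predC a) s.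
Proof. elim: s => [|x s IH] //=; case: (a x) => //= H; exact: IH. Qed.

Lemma asc_split T z : asc T -> [seq c <- T | c <= z] ++ [seq c <- T | z < c] = T.
Proof.
elim: T => [|h T IH] //= /andP[Hh HT].
case: leqP => Hhz /=; first by rewrite IH.
have Hall : all (fun c => z < c) T by apply/allP => x /(allP Hh); flia.
have -> : [seq c <- T | c <= z] = [::].
  by apply/eqP; rewrite -[_ == _]negbK -has_filter; apply/hasPn => x /(allP Hall); flia.
by move/all_filterP: Hall => ->.
Qed.

Lemma count_split (f : pred nat) T z :
  count f T = count f [seq c <- T | c <= z] + count f [seq c <- T | z < c].
Proof. elim: T => [|h T IH] //=; case: leqP => /= _; rewrite IH; flia. Qed.

Lemma ins_perm bs z : perm_eq (flatten (ins bs z)) (rcons (flatten bs) z).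
Proof.
elim: bs => [|T bs IH] //=.
case: ifP => _.
  by rewrite /= rcons_cat perm_cat2l.
case E: [seq c <- T | z < c] => [|g G] /=.
  apply/permP => f; rewrite -!cats1 !count_cat /=; flia.
apply/permP => f; have := count_split f T z; rewrite E /= -!cats1 !count_cat /= => ->; flia.
Qed.

Lemma ins_canon bs z : canonb bs -> canonb (ins bs z).
Proof.
elim: bs => [|T bs IH] //=.
case: T => [|h T] //= /and3P[HT Hl Hc].
case: ifP => Hzh.
  rewrite /= HT IH // andbT.
  by rewrite (perm_all _ (ins_perm bs z)) all_rcons Hzh Hl.
have Hhz : h <= z by move: Hzh; rewrite ltnNge => /negbFE.
have HTh : all (fun x => h <= x) T by move: HT => /andP[].
rewrite Hzh Hhz /=.
case E: [seq c <- T | z < c] => [|g G] /=.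
  have HTz : all (fun c => c <= z) T by move/filter_nil_all: E => /allP H; apply/allP => x /H /=; flia.
  rewrite Hl Hc !andbT all_rcons Hhz HTh /=.
  by apply: asc_rcons_le => //; case/andP: HT.
have HaT : asc T by case/andP: HT.
have HgG : g \in [seq c <- T | z < c] by rewrite E inE eqxx.
move: (HgG); rewrite mem_filter => /andP[Hzg HgT].
have Hhg : h <= g by apply: (allP HTh).
have HaF : asc [seq c <- T | c <= z] by apply: pairwise_filter.
have HFz : all (fun c => c <= z) [seq c <- T | c <= z] by apply/allP => x; rewrite mem_filter => /andP[].
rewrite Hl Hc !andbT.
have := pairwise_filter (fun c => z < c) HaT; rewrite E /= => ->.
apply/and4P; split => //.
- rewrite all_cat all_rcons; apply/andP; split; first flia.
  apply/andP; split; [apply/andP; split; first flia|].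
  + by apply/allP => x /(allP HFz); flia.
  + by apply/allP => x /(allP Hl); flia.
- rewrite all_rcons Hhz /=; apply/allP => x; rewrite mem_filter => /andP[_ /(allP HTh)] //.
- exact: asc_rcons_le.
Qed.


Lemma ins_case1 T1 bs z : canonb bs -> asc T1 -> T1 != [::] -> all (fun c => c <= z) T1 ->
  all (fun y => y < head 0 T1) (flatten bs) ->
  hc (rcons (T1 ++ flatten bs) z) (rcons T1 z ++ flatten bs).
Proof.
case/lastP: T1 => [|T0 t] // Hc HaT' _ HTz Hl'.
have Hht := asc_head_last T0 t HaT'.
have Htz : t <= z by move: HTz; rewrite all_rcons => /andP[].
have HLt : all (fun x => x < t) (flatten bs).
  by apply/allP => x /(allP Hl'); rewrite headI /=; flia.
by apply: (hcC T0 [::] (Y' bs t z Hc HLt Htz)); lseq.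
Qed.

Lemma ins_hc bs z : canonb bs -> hc (rcons (flatten bs) z) (flatten (ins bs z)).
Proof.
elim: bs => [|T bs IH] /=; first by move=> _; exact: hc_refl.
case: T => [|h T] //= /and3P[HT Hl Hc].
have HaT' : asc (h :: T) by [].
case/andP: HT => HTh HaT.
case: ifP => Hzh.
  by apply: (hcC (h :: T) [::] (IH Hc)); lseq.
have Hhz : h <= z by move: Hzh; rewrite ltnNge => /negbFE.
case E: [seq c <- T | z < c] => [|g G]; rewrite ?Hzh /=.
  have HTz : all (fun c => c <= z) (h :: T).
    by rewrite /= Hhz; move/filter_nil_all: E => /allP H; apply/allP => x /H /=; flia.
  exact: (ins_case1 (h :: T) bs z Hc HaT' isT HTz Hl).
have Hsp := asc_split (h :: T) z HaT'.
move: Hsp; rewrite /= Hhz Hzh /= E => Hsp.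
set F := [seq c <- T | c <= z] in Hsp *.
have HaFG : asc ((h :: F) ++ (g :: G)) by rewrite cat_cons Hsp.
move: HaFG; rewrite pairwise_cat => /and3P[_ HaF HaG].
have HFz : all (fun c => c <= z) (h :: F).
  by rewrite /= Hhz; apply/allP => x; rewrite mem_filter => /andP[].
have HGz : all (fun c => z < c) (g :: G).
  by rewrite -E; apply/allP => x; rewrite mem_filter => /andP[].
have HT2 : T = F ++ g :: G by case: Hsp.
have HFh : all (fun x => h <= x) F by apply/allP => x; rewrite mem_filter => /andP[_ /(allP HTh)].
clearbody F; rewrite HT2.
case: bs IH Hl Hc => [|B bs] _ Hl Hc /=.
  by apply: (hcC [::] [::] (M2 (h :: F) (g :: G) z isT isT HaF HaG HFz HGz)); lseq.
case/and4P: Hc => HBn HaB HlB Hc.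
have HBF : all (fun b => all (fun x => b < x) (h :: F)) B.
  apply/allP => b Hb; apply/allP => x Hx.
  have : b < h by move: Hl; rewrite /= all_cat => /andP[/allP /(_ b Hb)].
  have : h <= x by move: Hx; rewrite inE => /orP[/eqP -> //| /(allP HFh)].
  flia.
have HBh : all (fun b => b < h) B by move: Hl; rewrite /= all_cat => /andP[].
clear Hl.
move: HBn HaB HlB HBF HBh; case/lastP: B => [|B0 bm] // _ HaB HlB HBF HBh.
have Hbmh : bm < h by move: HBh; rewrite all_rcons => /andP[].
have Hbmz : bm <= z by flia.
have Hht := asc_head_last B0 bm HaB.
have HLbm : all (fun x => x < bm) (flatten bs).
  by apply/allP => x /(allP HlB); rewrite headI /=; flia.
apply: (@hc_trans _ ((h :: F) ++ (g :: G) ++ rcons B0 bm ++ [:: z] ++ flatten bs)).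
  by apply: (hcC ((h :: F) ++ (g :: G) ++ B0) [::] (Y' bs bm z Hc HLbm Hbmz)); lseq.
by apply: (hcC [::] (flatten bs) (K (h :: F) (g :: G) (rcons B0 bm) z isT isT (rcons_nnil _ _) HaF HaG HaB HFz HGz HBF)); lseq.
Qed.

Definition cbl (u : seq nat) := foldl ins [::] u.

Lemma cbl_spec u : canonb (cbl u) /\ hc u (flatten (cbl u)).
Proof.
elim/last_ind: u => [|u z [Hc IH]]; first by split => //; exact: hc_refl.
rewrite /cbl foldl_rcons -/(cbl u); split; first exact: ins_canon.
apply: hc_trans (ins_hc _ z Hc).
by apply: (hcC [::] [:: z] IH); lseq.
Qed.

Fixpoint before (y x : nat) (w : seq nat) : bool :=
  if w is c :: w' then ((c == y) && (x \in w')) || before y x w' else false.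

Definition consec (w : seq nat) (x y : nat) : bool :=
  [&& x < y, x \in w, y \in w & all (fun c => ~~ ((x < c) && (c < y))) w].

Definition Eqv (u v : seq nat) : Prop :=
  perm_eq u v /\ forall x y, consec u x y -> before y x u = before y x v.

Lemma before_cat y x s t :
  before y x (s ++ t) = [|| before y x s, (y \in s) && (x \in t) | before y x t].
Proof.
elim: s => [|c s IH] //=.
rewrite IH mem_cat inE [y == c]eq_sym.
by case: (c == y); case: (x \in s); case: (x \in t); case: (before y x s); case: (y \in s); case: (before y x t).
Qed.

Lemma before_mem y x w : before y x w -> (y \in w) && (x \in w).
Proof.
elim: w => [|c w IH] //= /orP[/andP[/eqP -> Hx]|/IH /andP[Hy Hx]].
  by rewrite !inE eqxx Hx orbT.
by rewrite !inE Hy Hx !orbT.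
Qed.

Lemma nbw x y a : ~~ ((x < a) && (a < y)) -> a <= x \/ y <= a.
Proof. case: (ltnP x a); case: (ltnP a y) => //= *; [right|left|left]; flia. Qed.

Lemma rel_before l r x y : hypo_rel l r -> x < y ->
  all (fun c => ~~ ((x < c) && (c < y))) l -> before y x l = before y x r.
Proof.
case=> [[a [b [c [H1 H2 -> ->]]]]|[[a [b [c [H1 H2 -> ->]]]]|[[a [b [c [d [H1 H2 H3 -> ->]]]]]|[a [b [c [d [H1 H2 H3 -> ->]]]]]]]] Hxy /=;
rewrite ?andbT => HN;
repeat match goal with HN : is_true (_ && _) |- _ => case/andP: HN => /nbw ? HN end;
move/nbw: HN => ?;
rewrite !inE ?andbT ?orbF;
repeat match goal with |- context [?u == ?v] => case: (u =P v) => ? end; simpl;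
try reflexivity; exfalso; lia.
Qed.

Lemma rel_perm l r : hypo_rel l r -> perm_eq l r.
Proof.
case=> [[a [b [c [_ _ -> ->]]]]|[[a [b [c [_ _ -> ->]]]]|[[a [b [c [d [_ _ _ -> ->]]]]]|[a [b [c [d [_ _ _ -> ->]]]]]]]].
all: apply/permP => f /=.
all: lia.
Qed.

Lemma consec_perm u v x y : perm_eq u v -> consec u x y = consec v x y.
Proof. by move=> H; have Hm := perm_mem H; rewrite /consec !Hm (perm_all _ H). Qed.

Lemma Eqv_refl u : Eqv u u. Proof. by split. Qed.
Lemma Eqv_sym u v : Eqv u v -> Eqv v u.
Proof.
move=> [Hp H]; split; first by rewrite perm_sym.
by move=> x y Hc; rewrite H // (consec_perm _ _ _ _ Hp).
Qed.
Lemma Eqv_trans u v w : Eqv u v -> Eqv v w -> Eqv u w.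
Proof.
move=> [Hp1 H1] [Hp2 H2]; split; first exact: perm_trans Hp2.
by move=> x y Hc; rewrite H1 // H2 // -(consec_perm _ _ _ _ Hp1).
Qed.

Lemma step_Eqv u v : hypo_step u v -> Eqv u v.
Proof.
move=> [p [q [l [r [Hr -> ->]]]]].
have Hp := rel_perm l r Hr.
split; first by rewrite perm_cat2l perm_cat2r.
move=> x y /and4P[Hxy _ _ Hall].
have Hl : all (fun c => ~~ ((x < c) && (c < y))) l.
  by apply/allP => c Hc; apply: (allP Hall); rewrite !mem_cat Hc orbT.
have Hm := perm_mem Hp.
by rewrite !before_cat (rel_before l r x y Hr Hxy Hl) !mem_cat !Hm.
Qed.

Lemma hc_Eqv u v : hc u v -> Eqv u v.
Proof.
elim => {u v} [u v H| u | u v _ IH | u v w _ IH1 _ IH2].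
- exact: step_Eqv.
- exact: Eqv_refl.
- exact: Eqv_sym.
- exact: Eqv_trans IH2.
Qed.

Lemma before_asc y x s : asc s -> x < y -> before y x s = false.
Proof.
elim: s => [|c s IH] //= /andP[Hc Hs] Hxy.
rewrite IH // orbF; apply/negP => /andP[/eqP Hcy Hx].
move: (allP Hc x Hx); rewrite Hcy; flia.
Qed.

Lemma before_notin y x w : (y \notin w) || (x \notin w) -> before y x w = false.
Proof. move=> H; apply/negP => /before_mem /andP[Hy Hx]; move: H; by rewrite Hy Hx. Qed.

Lemma exmax (s : seq nat) : s != [::] -> exists2 a, a \in s & all (fun x => x <= a) s.
Proof.
elim: s => [|c s IH] // _.
case: s IH => [|d s] IH; first by exists c; rewrite ?inE ?eqxx //= leqnn.
have [a Ha Hall] := IH isT.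
case: (leqP c a) => H.
- exists a; first by rewrite inE Ha orbT.
  by rewrite /= H; move: Hall => /= ->.
- exists c; first by rewrite inE eqxx.
  apply/allP => x; rewrite inE => /orP[/eqP -> //| /(allP Hall) /=]; flia.
Qed.

Definition nocut (w : seq nat) (v : nat) : Prop :=
  forall a b, v <= a -> consec w a b -> before b a w = false.

Lemma nocut_Eqv w1 w2 v : Eqv w1 w2 -> nocut w1 v -> nocut w2 v.
Proof.
move=> [Hp H] Hn a b Hva Hc2.
have Hc1 : consec w1 a b by rewrite (consec_perm _ _ _ _ Hp).
by rewrite -H // Hn.
Qed.

Lemma blockP h T bs v : canonb ((h :: T) :: bs) -> v \in (h :: T) ++ flatten bs ->
  (v \in h :: T <-> nocut ((h :: T) ++ flatten bs) v).
Proof.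
move=> /and4P[_ HT Hl Hc] Hv.
have HTh : all (leq h) (h :: T) by rewrite /= leqnn; case/andP: HT.
split.
- move=> HvT a b Hva /and4P[Hab Ha Hb Hall].
  have Hhv : h <= v by apply: (allP HTh).
  have HaT : a \in h :: T.
    move: Ha; rewrite mem_cat => /orP[//|/(allP Hl) /=]; flia.
  have HbT : b \in h :: T.
    move: Hb; rewrite mem_cat => /orP[//|/(allP Hl) /=]; flia.
  have HaL : a \notin flatten bs by apply/negP => /(allP Hl) /=; flia.
  have HbL : b \notin flatten bs by apply/negP => /(allP Hl) /=; flia.
  rewrite before_cat (before_asc _ _ _ HT Hab) (negbTE HaL) andbF /=.
  by apply: before_notin; rewrite HbL.
- move=> Hnc; apply/negPn/negP => HvT.
  have HvL : v \in flatten bs by move: Hv; rewrite mem_cat (negbTE HvT).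
  have HLn : flatten bs != [::] by case: (flatten bs) HvL.
  have [a Ha Hmax] := exmax _ HLn.
  have Hva : v <= a by apply: (allP Hmax).
  have Hah : a < h by apply: (allP Hl).
  have Hcons : consec ((h :: T) ++ flatten bs) a h.
    apply/and4P; split => //.
    + by rewrite mem_cat Ha orbT.
    + by rewrite mem_cat inE eqxx.
    + apply/allP => c; rewrite mem_cat => /orP[/(allP HTh) /= Hc'|/(allP Hmax) /= Hc']; flia.
  have := Hnc a h Hva Hcons.
  by rewrite before_cat inE eqxx Ha /= orbT.
Qed.

Lemma consec_lift T X a b : all (fun x => all (fun c => x < c) T) X -> consec X a b -> consec (T ++ X) a b.
Proof.
move=> HX /and4P[Hab Ha Hb Hall]; apply/and4P; split => //.
- by rewrite mem_cat Ha orbT.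
- by rewrite mem_cat Hb orbT.
- rewrite all_cat Hall andbT; apply/allP => c Hc.
  have := allP (allP HX b Hb) c Hc; flia.
Qed.

Lemma UNQ bs cs : canonb bs -> canonb cs -> Eqv (flatten bs) (flatten cs) -> flatten bs = flatten cs.
Proof.
elim: bs cs => [|T bs IH] [|U cs] //=.
- case: U => [|u U] //= _ _ [Hp _]; move: (perm_size Hp) => /=; flia.
- case: T IH => [|t T] //= _ _ _ [Hp _]; move: (perm_size Hp) => /=; flia.
case: T IH => [|h T] // IH; case: U => [|h' U] // Hb Hc [Hp Hcut].
have Hb' := Hb; have Hc' := Hc.
move: Hb' Hc' => /and4P[_ HT Hl Hbs] /and4P[_ HU Hl' Hcs].
have key : forall v, (v \in h :: T) = (v \in h' :: U).
  move=> v; apply/idP/idP => Hv.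
  - have Hv1 : v \in (h :: T) ++ flatten bs by rewrite mem_cat Hv.
    have Hv2 : v \in (h' :: U) ++ flatten cs by rewrite -(perm_mem Hp).
    apply/(blockP h' U cs v Hc Hv2); apply: nocut_Eqv (conj Hp Hcut) _.
    exact/(blockP h T bs v Hb Hv1).
  - have Hv2 : v \in (h' :: U) ++ flatten cs by rewrite mem_cat Hv.
    have Hv1 : v \in (h :: T) ++ flatten bs by rewrite (perm_mem Hp).
    apply/(blockP h T bs v Hb Hv1); apply: nocut_Eqv (Eqv_sym _ _ (conj Hp Hcut)) _.
    exact/(blockP h' U cs v Hc Hv2).
have HTh : all (leq h) (h :: T) by rewrite /= leqnn; case/andP: HT.
have HUh : all (leq h') (h' :: U) by rewrite /= leqnn; case/andP: HU.
have Hcount : forall v, count_mem v (h :: T) = count_mem v (h' :: U).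
  move=> v; case HvT : (v \in h :: T).
  - have HvU : v \in h' :: U by rewrite -key.
    have Hn1 : count_mem v (flatten bs) = 0.
      apply/count_memPn/negP => /(allP Hl) /=; have := allP HTh v HvT; flia.
    have Hn2 : count_mem v (flatten cs) = 0.
      apply/count_memPn/negP => /(allP Hl') /=; have := allP HUh v HvU; flia.
    have := (permP Hp) (pred1 v); rewrite !count_cat Hn1 Hn2 !addn0 //.
  - have HvU : (v \in h' :: U) = false by rewrite -key.
    by rewrite (count_memPn (negbT HvT)) (count_memPn (negbT HvU)).
have HTU : h :: T = h' :: U.
  apply: (sorted_eq leq_trans anti_leq); rewrite ?sorted_pairwise //; try exact: leq_trans.
  apply/allP => x _; apply/eqP; exact: Hcount.
move: Hp Hcut Hl' Hcs Hc; rewrite -HTU => Hp Hcut Hl' Hcs Hc.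
have HX : all (fun x => all (fun c => x < c) (h :: T)) (flatten bs).
  apply/allP => x Hx; apply/allP => c Hc0; have := allP Hl x Hx; have := allP HTh c Hc0; simpl; flia.
have HY : all (fun x => all (fun c => x < c) (h :: T)) (flatten cs).
  apply/allP => x Hx; apply/allP => c Hc0; have := allP Hl' x Hx; have := allP HTh c Hc0; simpl; flia.
congr (_ ++ _); apply: IH => //; split; first by rewrite -(perm_cat2l (h :: T)).
move=> a b Hab.
have Hb1 : b \in flatten bs by case/and4P: Hab.
have := Hcut a b (consec_lift _ _ _ _ HX Hab).
have HbT : b \notin h :: T by apply/negP => /(allP HTh) /=; have := allP Hl b Hb1; simpl; flia.
have Hbf : before b a (h :: T) = false by apply: before_notin; rewrite HbT.
by rewrite !before_cat Hbf (negbTE HbT).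
Qed.

Lemma T2 u v : Eqv u v -> hc u v.
Proof.
move=> H; have [Hcu Hu] := cbl_spec u; have [Hcv Hv] := cbl_spec v.
have E : flatten (cbl u) = flatten (cbl v).
  apply: UNQ => //; apply: Eqv_trans (Eqv_sym _ _ (hc_Eqv _ _ Hu)) _.
  exact: Eqv_trans H (hc_Eqv _ _ Hv).
apply: hc_trans Hu _; rewrite E; exact: hc_sym.
Qed.

Lemma before_filter (P : pred nat) y x w : P x -> P y ->
  before y x [seq c <- w | P c] = before y x w.
Proof.
move=> Px Py; elim: w => [|c w IH] //=.
case Pc: (P c) => /=.
  by rewrite mem_filter Px IH.
rewrite IH; case: eqP => [Hcy|] //=; by move: Pc; rewrite Hcy Py.
Qed.

Lemma flipA a w x z : x < z -> ~~ ((x <= a) && (a < z)) ->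
  before z x ([seq c <- w | c <= a] ++ [seq c <- w | a < c]) = before z x w /\
  before z x ([seq c <- w | a < c] ++ [seq c <- w | c <= a]) = before z x w.
Proof.
move=> Hxz Hs; rewrite !before_cat.
case: (leqP z a) => Hza.
  have Hx : x <= a by flia.
  have HxG : x \notin [seq c <- w | a < c] by rewrite mem_filter; apply/negP => /andP[]; flia.
  have HzG : z \notin [seq c <- w | a < c] by rewrite mem_filter; apply/negP => /andP[]; flia.
  have E1 : before z x [seq c <- w | a < c] = false by apply: before_notin; rewrite HxG orbT.
  rewrite E1 (negbTE HxG) (negbTE HzG) andbF /= !orbF.
  by rewrite (before_filter (fun c => c <= a)).
have Hx : a < x by move: Hs; rewrite Hza andbT; case: leqP.
have HxF : x \notin [seq c <- w | c <= a] by rewrite mem_filter; apply/negP => /andP[]; flia.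
have HzF : z \notin [seq c <- w | c <= a] by rewrite mem_filter; apply/negP => /andP[]; flia.
have E1 : before z x [seq c <- w | c <= a] = false by apply: before_notin; rewrite HxF orbT.
rewrite E1 (negbTE HxF) (negbTE HzF) andbF /= !orbF.
by rewrite (before_filter (fun c => a < c)).
Qed.

Lemma flipB a w x z : x <= a -> a < z -> x \in w -> z \in w ->
  before z x ([seq c <- w | c <= a] ++ [seq c <- w | a < c]) = false /\
  before z x ([seq c <- w | a < c] ++ [seq c <- w | c <= a]) = true.
Proof.
move=> Hxa Haz Hx Hz.
have HxF : x \in [seq c <- w | c <= a] by rewrite mem_filter Hxa.
have HzG : z \in [seq c <- w | a < c] by rewrite mem_filter Haz.
have HxG : x \notin [seq c <- w | a < c] by rewrite mem_filter; apply/negP => /andP[]; flia.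
have HzF : z \notin [seq c <- w | c <= a] by rewrite mem_filter; apply/negP => /andP[]; flia.
rewrite !before_cat HxF HzG (negbTE HxG) (negbTE HzF) /=.
by rewrite !before_notin ?HxG ?HzF ?orbT.
Qed.

Lemma consec_uniq w a y x z : consec w a y -> consec w x z -> x <= a -> a < z -> x = a /\ z = y.
Proof.
move=> /and4P[Hay Ha Hy Hall] /and4P[Hxz Hx Hz Hall2] Hxa Haz.
have Hxa' : x = a.
  case: (ltnP x a) => Hlt; last by apply/eqP; rewrite eqn_leq Hxa Hlt.
  by move: (allP Hall2 a Ha); rewrite Hlt Haz.
subst x; split => //.
case: (ltngtP z y) => // Hlt.
- by move: (allP Hall z Hz); rewrite Haz Hlt.
- by move: (allP Hall2 y Hy); rewrite Hay Hlt.
Qed.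

Lemma all_filterA (A : pred nat) (P : pred nat) w : all A w -> all A [seq c <- w | P c].
Proof. by move=> H; apply/allP => c; rewrite mem_filter => /andP[_ /(allP H)]. Qed.

Lemma flip_step (A : pred nat) w a y : all A w -> consec w a y ->
  exists w', [/\ all A w', cshift A w w', perm_eq w' w,
    (forall x z, consec w x z -> x != a -> before z x w' = before z x w) &
    before y a w' = ~~ before y a w].
Proof.
move=> HA Hc.
set F := [seq c <- w | c <= a]; set G := [seq c <- w | a < c].
have HpFG : perm_eq (F ++ G) w.
  have E : [seq c <- w | predC (fun c => c <= a) c] = G by apply: eq_filter => c /=; rewrite ltnNge.
  rewrite -E; apply/permPl; exact: perm_filterC.
have HpGF : perm_eq (G ++ F) w by rewrite perm_catC.
have Hay : a < y by case/and4P: Hc.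
have Ha : a \in w by case/and4P: Hc.
have Hy : y \in w by case/and4P: Hc.
have Hothers : forall x z, consec w x z -> x != a ->
    before z x (F ++ G) = before z x w /\ before z x (G ++ F) = before z x w.
  move=> x z Hxz Hxa; apply: flipA; first by case/and4P: Hxz.
  apply/negP => /andP[H1 H2]; have [Hx _] := consec_uniq w a y x z Hc Hxz H1 H2.
  by move: Hxa; rewrite Hx eqxx.
have [HB1 HB2] := flipB a w a y (leqnn a) Hay Ha Hy.
case Hb: (before y a w).
- (* cut present: w ~ G ++ F, new = F ++ G *)
  have HE : Eqv w (G ++ F).
    split; first by rewrite perm_sym.
    move=> x z Hxz; case: (eqVneq x a) => [Hx|Hxa].
      subst x; have Hz : z = y.
        have Haz : a < z by case/and4P: Hxz.
        by have [_ ->] := consec_uniq w a y a z Hc Hxz (leqnn a) Haz.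
      by subst z; rewrite Hb HB2.
    by have [_ ->] := Hothers x z Hxz Hxa.
  exists (F ++ G); split.
  + by rewrite all_cat !all_filterA.
  + exists G, F; split; [exact: all_filterA|exact: all_filterA|exact: T2|exact: hc_refl].
  + exact: HpFG.
  + by move=> x z Hxz Hxa; have [-> _] := Hothers x z Hxz Hxa.
  + by rewrite HB1.
- have HE : Eqv w (F ++ G).
    split; first by rewrite perm_sym.
    move=> x z Hxz; case: (eqVneq x a) => [Hx|Hxa].
      subst x; have Hz : z = y.
        have Haz : a < z by case/and4P: Hxz.
        by have [_ ->] := consec_uniq w a y a z Hc Hxz (leqnn a) Haz.
      by subst z; rewrite Hb HB1.
    by have [-> _] := Hothers x z Hxz Hxa.
  exists (G ++ F); split.
  + by rewrite all_cat !all_filterA.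
  + exists F, G; split; [exact: all_filterA|exact: all_filterA|exact: T2|exact: hc_refl].
  + exact: HpGF.
  + by move=> x z Hxz Hxa; have [_ ->] := Hothers x z Hxz Hxa.
  + by rewrite HB2.
Qed.

Lemma walk_perm A k s t : walk A k s t -> perm_eq s t.
Proof.
elim: k s => [|k IH] s /=; first by move/hc_Eqv => [].
move=> [w [_ [[x [y [_ _ Hs Hw]]] Hwt]]].
case: (hc_Eqv _ _ Hs) => Hp1 _; case: (hc_Eqv _ _ Hw) => Hp2 _.
apply: perm_trans Hp1 _; apply: perm_trans _ (IH w Hwt).
rewrite perm_catC perm_sym; exact: Hp2.
Qed.

Lemma claim (A : pred nat) v : (forall c, A c -> 0 < c) -> forall k w, all A w -> perm_eq w v ->
  (forall x y, consec w x y -> k < x -> before y x w = before y x v) ->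
  exists2 j, j <= k & walk A j w v.
Proof.
move=> Hpos; elim=> [|k IH] w HA Hp Hagree.
  exists 0 => //=; apply: T2; split => // x y Hc; apply: Hagree => //.
  have Hx : x \in w by case/and4P: Hc.
  exact: Hpos _ (allP HA x Hx).
case Hex: (has (fun y => consec w k.+1 y && (before y k.+1 w != before y k.+1 v)) w).
  case/hasP: Hex => y _ /andP[Hc Hne].
  have [w' [HA' Hsh Hp' Hoth Hflip]] := flip_step A w k.+1 y HA Hc.
  have Hp'v : perm_eq w' v := perm_trans Hp' Hp.
  have [j Hj Hw] : exists2 j, j <= k & walk A j w' v.
    apply: IH => // x z Hxz Hkx.
    have Hxz' : consec w x z by rewrite -(consec_perm _ _ _ _ Hp').
    case: (eqVneq x k.+1) => [Hxa|Hxa].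
      subst x; have Haz : k.+1 < z by case/and4P: Hxz'.
      have [_ Hz] := consec_uniq w k.+1 y k.+1 z Hc Hxz' (leqnn _) Haz.
      subst z; rewrite Hflip; move: Hne.
      by case: (before y k.+1 w); case: (before y k.+1 v).
    rewrite Hoth //; apply: Hagree => //; move: Hkx Hxa; clear; move=> H1 /eqP H2; flia.
  by exists j.+1 => //; exists w'.
have [j Hj Hw] : exists2 j, j <= k & walk A j w v.
  apply: IH => // x z Hxz Hkx.
  case: (eqVneq x k.+1) => [Hxa|Hxa].
    subst x; have Hz : z \in w by case/and4P: Hxz.
    move/negbT: Hex => /hasPn /(_ z Hz); rewrite Hxz /=.
    by case: (before z k.+1 w); case: (before z k.+1 v).
  apply: Hagree => //; move: Hkx Hxa; clear; move=> H1 /eqP H2; flia.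
by exists j => //; apply: leqW.
Qed.

Lemma ev_perm s t : ev_eq s t <-> perm_eq s t.
Proof.
split => [H|H a]; last exact: (permP H).
apply/allP => x _; apply/eqP; exact: H.
Qed.

Lemma le_sumn s x : x \in s -> x <= sumn s.
Proof. elim: s => [|c s IH] //=; rewrite inE => /orP[/eqP ->|/IH]; flia. Qed.

Definition Phi n w := count (fun a => before a.+1 a w) (iota 1 n.-1).

Lemma consec_iota n w a : perm_eq w (iota 1 n) -> 1 <= a -> a < n -> consec w a a.+1.
Proof.
move=> Hp H1 H2; apply/and4P; split => //.
- by rewrite (perm_mem Hp) mem_iota; apply/andP; split; flia.
- by rewrite (perm_mem Hp) mem_iota; apply/andP; split; flia.
- by apply/allP => c _; apply/negP => /andP[]; flia.
Qed.

Lemma Phi_Eqv n w w' : perm_eq w (iota 1 n) -> Eqv w w' -> Phi n w = Phi n w'.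
Proof.
move=> Hp [_ H]; apply: eq_in_count => a; rewrite mem_iota => /andP[H1 H2].
by apply: H; apply: (consec_iota n) => //; flia.
Qed.

Lemma count_sum2 (p1 q1 p2 q2 : pred nat) s :
  {in s, forall a, p1 a + q1 a = p2 a + q2 a} ->
  count p1 s + count q1 s = count p2 s + count q2 s.
Proof.
elim: s => [|c s IH] //= H.
have := H c (mem_head _ _).
have H' : {in s, forall a, p1 a + q1 a = p2 a + q2 a} by move=> a Ha; apply: H; rewrite inE Ha orbT.
have := IH H'; flia.
Qed.

Lemma tele (b : nat -> bool) k m :
  count (fun a => b a && ~~ b a.+1) (iota k m) + b (k + m) =
  count (fun a => ~~ b a && b a.+1) (iota k m) + b k.
Proof.
elim: m k => [|m IH] k /=; first by rewrite addn0.
have := IH k.+1; rewrite addSnnS.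
by case: (b k); case: (b k.+1) => /=; flia.
Qed.

Lemma Phi_swap n x y : perm_eq (x ++ y) (iota 1 n) -> Phi n (y ++ x) <= (Phi n (x ++ y)).+1.
Proof.
move=> Hp.
have Hu : uniq (x ++ y) by rewrite (perm_uniq Hp) iota_uniq.
have Hm := perm_mem Hp.
have Hxy : forall c, c \in x -> c \notin y.
  move=> c Hc; move: Hu; rewrite cat_uniq => /and3P[_ /hasPn H _]; apply/negP => Hy.
  by have := H c Hy; rewrite /= Hc.
have Hin : forall c, 1 <= c <= n -> (c \in y) = ~~ (c \in x).
  move=> c Hc; have : c \in x ++ y by rewrite Hm mem_iota; move: Hc; clear; move=> /andP[]; flia.
  rewrite mem_cat; case Hcx: (c \in x) => /= H; last by [].
  by apply/negbTE; apply: Hxy.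
set b := fun c => c \in x.
have Hpt : {in iota 1 n.-1, forall a,
   before a.+1 a (y ++ x) + (~~ b a && b a.+1) = before a.+1 a (x ++ y) + (b a && ~~ b a.+1)}.
  move=> a; rewrite mem_iota => /andP[H1 H2].
  have Ha : 1 <= a <= n by apply/andP; split; flia.
  have Ha1 : 1 <= a.+1 <= n by apply/andP; split; flia.
  rewrite !before_cat (Hin a Ha) (Hin a.+1 Ha1) /b.
  have HBx : before a.+1 a x -> (a \in x) && (a.+1 \in x) by move/before_mem => /andP[-> ->].
  have HBy : before a.+1 a y -> ~~ (a \in x) && ~~ (a.+1 \in x).
    by move/before_mem => /andP; rewrite (Hin a Ha) (Hin a.+1 Ha1) => -[-> ->].
  move: HBx HBy.
  case: (a \in x); case: (a.+1 \in x); case: (before a.+1 a x); case: (before a.+1 a y) => /= G1 G2; try by [].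
  all: try by move: (G1 isT).
  all: try by move: (G2 isT).
have Hsum := count_sum2 _ _ _ _ _ Hpt.
have Ht := tele b 1 n.-1.
rewrite /Phi; move: Hsum Ht; clear; move=> H1 H2.
have : (b (1 + n.-1) : nat) <= 1 by case: (b _).
have : (b 1 : nat) <= 1 by case: (b _).
flia.
Qed.

Lemma Phi_step A n w w' : perm_eq w (iota 1 n) -> cshift A w w' ->
  perm_eq w' (iota 1 n) /\ Phi n w' <= (Phi n w).+1.
Proof.
move=> Hp [x [y [_ _ Hs Hw]]].
have E1 := hc_Eqv _ _ Hs; have E2 := hc_Eqv _ _ Hw.
have Hpxy : perm_eq (x ++ y) (iota 1 n) by apply: perm_trans Hp; rewrite perm_sym; exact: E1.1.
have Hpyx : perm_eq (y ++ x) (iota 1 n) by rewrite perm_catC.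
have Hpw' : perm_eq w' (iota 1 n) by apply: perm_trans Hpyx; exact: E2.1.
split => //.
rewrite (Phi_Eqv n w (x ++ y) Hp E1) (Phi_Eqv n w' (y ++ x) Hpw' E2).
exact: Phi_swap.
Qed.

Lemma Phi_walk A n j s t : perm_eq s (iota 1 n) -> walk A j s t -> Phi n t <= Phi n s + j.
Proof.
elim: j s => [|j IH] s Hp /=.
  by move/hc_Eqv => E; rewrite (Phi_Eqv n s t Hp E) addn0.
move=> [w [_ [Hsh Hwt]]].
have [Hpw Hle] := Phi_step A n s w Hp Hsh.
have := IH w Hpw Hwt; flia.
Qed.

Lemma asc_iota m k : asc (iota m k).
Proof.
elim: k m => [|k IH] m //=; rewrite IH andbT.
by apply/allP => c; rewrite mem_iota => /andP[H _]; flia.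
Qed.

Lemma before_rev y x s : before y x (rev s) = before x y s.
Proof.
elim: s => [|c s IH] //=.
rewrite rev_cons -cats1 before_cat IH mem_rev /= inE [c == x]eq_sym in_nil andbF !orbF.
by case: (before x y s); case: (x == c); case: (y \in s).
Qed.

Lemma before_iota m k x y : m <= x -> x < y -> y < m + k -> before x y (iota m k).
Proof.
elim: k m => [|k IH] m H1 H2 H3; first by flia.
change (before x y (m :: iota m.+1 k)); rewrite [before _ _ _]/= ?eqnE.
case: (eqVneq m x) => [Hmx|Hmx].
  by subst x; rewrite /= mem_iota; apply/orP; left; apply/andP; split; flia.
rewrite IH ?orbT //; move: H1 H3 Hmx; clear; move=> H1 H3 /eqP H2; flia.
Qed.

Lemma Phi_iota n : Phi n (iota 1 n) = 0.
Proof.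
apply/eqP; rewrite -leqn0 leqNgt -has_count; apply/hasPn => a _.
by rewrite before_asc ?asc_iota.
Qed.

Lemma Phi_rev n : 1 <= n -> Phi n (rev (iota 1 n)) = n.-1.
Proof.
move=> Hn; rewrite /Phi; transitivity (count predT (iota 1 n.-1)); last by rewrite count_predT size_iota.
apply: eq_in_count => a; rewrite mem_iota => /andP[H1 H2] /=.
rewrite before_rev before_iota //; flia.
Qed.

Theorem mainTheorem1 :
  (forall s t : seq nat, all alphA s -> all alphA t ->
     (connected alphA s t <-> ev_eq s t)) /\
  (forall n : nat, 1 <= n ->
     (forall s t : seq nat, all (alphAn n) s -> all (alphAn n) t ->
        connected (alphAn n) s t -> dist_le (alphAn n) s t (n - 1)) /\
     (exists s t : seq nat, [/\ all (alphAn n) s, all (alphAn n) t &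
        dist_eq (alphAn n) s t (n - 1)])).
Proof.
split.
  move=> s t Hs Ht; split.
    by move=> [k Hw]; apply/ev_perm; exact: walk_perm Hw.
  move=> /ev_perm Hp.
  have Hpos : forall c, alphA c -> 0 < c by [].
  have Hb : forall x y, consec s x y -> sumn s < x -> before y x s = before y x t.
    move=> x y Hc Hx; exfalso.
    have Hy : y \in s by case/and4P: Hc.
    have Hxy : x < y by case/and4P: Hc.
    have := le_sumn s y Hy; move: Hx Hxy; clear; move=> *; flia.
  have [j _ Hw] := claim alphA t Hpos (sumn s) s Hs Hp Hb.
  by exists j.
move=> n Hn.
have Hpos : forall c, alphAn n c -> 0 < c by move=> c /andP[].
have Hbound : forall s t, all (alphAn n) s -> forall x y, consec s x y -> n - 1 < x ->
    before y x s = before y x t.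
  move=> s t Hs x y Hc Hx; exfalso.
  have Hy : y \in s by case/and4P: Hc.
  have Hxy : x < y by case/and4P: Hc.
  have := allP Hs y Hy; rewrite /alphAn => /andP[_ Hyn].
  move: Hx Hxy Hyn; clear; move=> *; flia.
split.
  move=> s t Hs Ht [k Hw]; have Hp := walk_perm _ _ _ _ Hw.
  have [j Hj Hw'] := claim (alphAn n) t Hpos (n - 1) s Hs Hp (Hbound s t Hs).
  by exists j.
have Hs : all (alphAn n) (iota 1 n).
  apply/allP => c; rewrite mem_iota /alphAn => /andP[H1 H2]; apply/andP; split; flia.
have Ht : all (alphAn n) (rev (iota 1 n)) by rewrite all_rev.
exists (iota 1 n), (rev (iota 1 n)); split => //.
have Hp : perm_eq (iota 1 n) (rev (iota 1 n)) by rewrite perm_sym perm_rev.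
have [j Hj Hw] := claim (alphAn n) (rev (iota 1 n)) Hpos (n - 1) (iota 1 n) Hs Hp (Hbound _ _ Hs).
have Hlow : forall j, walk (alphAn n) j (iota 1 n) (rev (iota 1 n)) -> n - 1 <= j.
  move=> j' Hw'; have := Phi_walk _ n j' _ _ (perm_refl _) Hw'.
  rewrite Phi_iota Phi_rev //; move: Hn; clear; move=> *; flia.
have Hjn : j = n - 1 by have := Hlow j Hw; move: Hj; clear; move=> *; flia.
split; first by rewrite -Hjn.
move=> j' Hj' Hw'; have := Hlow j' Hw'; move: Hj'; clear; move=> *; flia.
Qed.
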